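(* Let $M=P+\varepsilon D\in\mathbb{DH}[t]$ be a monic polynomial and let $N\in\mathbb{D}[t]$ be a monic polynomial of degree two which divides the norm polynomial $M\overline{M}$ in $\mathbb{D}[t]$, and suppose that the primal part of $N$ (a real polynomial) does not divide $P$ in $\mathbb{H}[t]$. Then there exists a unique $h\in\mathbb{DH}$ such that $t-h$ is a right factor of $M$ (i.e. $M=Q(t-h)$ for some $Q\in\mathbb{DH}[t]$) and $(t-h)(t-\overline{h})=N$.
   Context: $\mathbb{D}=\mathbb{R}[\varepsilon]/\langle\varepsilon^2\rangle$ denotes the dual numbers. $\mathbb{H}$ denotes the real quaternions with basis $1,\mathbf{i},\mathbf{j},\mathbf{k}$, $\mathbf{i}^2=\mathbf{j}^2=\mathbf{k}^2=\mathbf{i}\mathbf{j}\mathbf{k}=-1$. The dual quaternions $\mathbb{DH}$ are the $\mathbb{D}$-algebra $\mathbb{H}\otimes_{\mathbb{R}}\mathbb{D}$ ($\varepsilon$ commutes with $\mathbf{i},\mathbf{j},\mathbf{k}$); every $q\in\mathbb{DH}$ is $q=p+\varepsilon d$ with $p,d\in\mathbb{H}$ (primal and dual part). The conjugate of $q=q_0+q_1\mathbf{i}+q_2\mathbf{j}+q_3\mathbf{k}$ ($q_i\in\mathbb{D}$) is $\overline{q}=q_0-q_1\mathbf{i}-q_2\mathbf{j}-q_3\mathbf{k}$. $\mathbb{DH}[t]$ is the ring of polynomials with dual quaternion coefficients in which the indeterminate $t$ commutes with all coefficients. For $M=\sum m_it^i$, $\overline{M}=\sum\overline{m_i}t^i$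 and the norm polynomial is $M\overline{M}=\overline{M}M\in\mathbb{D}[t]$. Every $M\in\mathbb{DH}[t]$ is written $M=P+\varepsilon D$ with $P,D\in\mathbb{H}[t]$ (primal and dual part). Monic means leading coefficient $1$. *)

(* Defs.v *)
From HB Require Import structures.
From mathcomp Require Import all_boot all_order all_algebra.
From mathcomp Require Import ring.
Set Implicit Arguments.
Unset Strict Implicit.
Unset Printing Implicit Defensive.
Import GRing.Theory.
Local Open Scope ring_scope.

(* Dual numbers  R[eps]/(eps^2) : pairs a + eps b.                      *)
Section Dual.
Variable R : comNzRingType.

Record dual := Dual { dprim : R; ddual : R }.

Definition dual_to (x : dual) : R * R := (dprim x, ddual x).
Definition dual_of (p : R * R) : dual := Dual p.1 p.2.
Lemma dual_toK : cancel dual_to dual_of. Proof. by case. Qed.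
HB.instance Definition _ := Choice.copy dual (can_type dual_toK).

Definition dzero := Dual 0 0.
Definition done_ := Dual 1 0.
Definition dopp x := Dual (- dprim x) (- ddual x).
Definition dadd x y := Dual (dprim x + dprim y) (ddual x + ddual y).
(* (a + eps b)(c + eps d) = ac + eps (ad + bc) *)
Definition dmul x y :=
  Dual (dprim x * dprim y) (dprim x * ddual y + ddual x * dprim y).

Lemma daddA : associative dadd.
Proof. by move=> [? ?] [? ?] [? ?]; rewrite /dadd /=; congr Dual; ring. Qed.
Lemma daddC : commutative dadd.
Proof. by move=> [? ?] [? ?]; rewrite /dadd /=; congr Dual; ring. Qed.
Lemma dadd0 : left_id dzero dadd.
Proof. by move=> [? ?]; rewrite /dadd /=; congr Dual; ring. Qed.
Lemma daddN : left_inverse dzero dopp dadd.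
Proof. by move=> [? ?]; rewrite /dadd /=; congr Dual; ring. Qed.
Lemma dmulA : associative dmul.
Proof. by move=> [? ?] [? ?] [? ?]; rewrite /dmul /=; congr Dual; ring. Qed.
Lemma dmul1 : left_id done_ dmul.
Proof. by move=> [? ?]; rewrite /dmul /=; congr Dual; ring. Qed.
Lemma dmul1r : right_id done_ dmul.
Proof. by move=> [? ?]; rewrite /dmul /=; congr Dual; ring. Qed.
Lemma dmulDl : left_distributive dmul dadd.
Proof. by move=> [? ?] [? ?] [? ?]; rewrite /dmul /dadd /=; congr Dual; ring. Qed.
Lemma dmulDr : right_distributive dmul dadd.
Proof. by move=> [? ?] [? ?] [? ?]; rewrite /dmul /dadd /=; congr Dual; ring. Qed.
Lemma done_neq0 : done_ != dzero.
Proof. by apply/eqP => -[] /eqP; rewrite oner_eq0. Qed.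
Lemma dmulC : commutative dmul.
Proof. by move=> [? ?] [? ?]; rewrite /dmul /=; congr Dual; ring. Qed.

HB.instance Definition _ := GRing.isNzRing.Build dual
  daddA daddC dadd0 daddN dmulA dmul1 dmul1r dmulDl dmulDr done_neq0.
HB.instance Definition _ := GRing.PzRing_hasCommutativeMul.Build dual dmulC.

Definition eps : dual := Dual 0 1.
End Dual.

(* Quaternions over a commutative ring A: q0 + q1 i + q2 j + q3 k,      *)
(* with i^2 = j^2 = k^2 = ijk = -1.                                     *)
Section Quat.
Variable A : comNzRingType.

Record quat := Quat { q0 : A; q1 : A; q2 : A; q3 : A }.

Definition quat_to (x : quat) : A * A * A * A := (q0 x, q1 x, q2 x, q3 x).
Definition quat_of (p : A * A * A * A) : quat := Quat p.1.1.1 p.1.1.2 p.1.2 p.2.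
Lemma quat_toK : cancel quat_to quat_of. Proof. by case. Qed.
HB.instance Definition _ := Choice.copy quat (can_type quat_toK).

Definition qzero := Quat 0 0 0 0.
Definition qone := Quat 1 0 0 0.
Definition qopp x := Quat (- q0 x) (- q1 x) (- q2 x) (- q3 x).
Definition qadd x y := Quat (q0 x + q0 y) (q1 x + q1 y) (q2 x + q2 y) (q3 x + q3 y).
Definition qmul x y := Quat
  (q0 x * q0 y - q1 x * q1 y - q2 x * q2 y - q3 x * q3 y)
  (q0 x * q1 y + q1 x * q0 y + q2 x * q3 y - q3 x * q2 y)
  (q0 x * q2 y - q1 x * q3 y + q2 x * q0 y + q3 x * q1 y)
  (q0 x * q3 y + q1 x * q2 y - q2 x * q1 y + q3 x * q0 y).

Lemma qaddA : associative qadd.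
Proof. by move=> [? ? ? ?] [? ? ? ?] [? ? ? ?]; rewrite /qadd /=; congr Quat; ring. Qed.
Lemma qaddC : commutative qadd.
Proof. by move=> [? ? ? ?] [? ? ? ?]; rewrite /qadd /=; congr Quat; ring. Qed.
Lemma qadd0 : left_id qzero qadd.
Proof. by move=> [? ? ? ?]; rewrite /qadd /=; congr Quat; ring. Qed.
Lemma qaddN : left_inverse qzero qopp qadd.
Proof. by move=> [? ? ? ?]; rewrite /qadd /=; congr Quat; ring. Qed.
Lemma qmulA : associative qmul.
Proof. by move=> [? ? ? ?] [? ? ? ?] [? ? ? ?]; rewrite /qmul /=; congr Quat; ring. Qed.
Lemma qmul1 : left_id qone qmul.
Proof. by move=> [? ? ? ?]; rewrite /qmul /=; congr Quat; ring. Qed.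
Lemma qmul1r : right_id qone qmul.
Proof. by move=> [? ? ? ?]; rewrite /qmul /=; congr Quat; ring. Qed.
Lemma qmulDl : left_distributive qmul qadd.
Proof. by move=> [? ? ? ?] [? ? ? ?] [? ? ? ?]; rewrite /qmul /qadd /=; congr Quat; ring. Qed.
Lemma qmulDr : right_distributive qmul qadd.
Proof. by move=> [? ? ? ?] [? ? ? ?] [? ? ? ?]; rewrite /qmul /qadd /=; congr Quat; ring. Qed.
Lemma qone_neq0 : qone != qzero.
Proof. by apply/eqP => -[] /eqP; rewrite oner_eq0. Qed.

HB.instance Definition _ := GRing.isNzRing.Build quat
  qaddA qaddC qadd0 qaddN qmulA qmul1 qmul1r qmulDl qmulDr qone_neq0.

Definition qconj (x : quat) : quat := Quat (q0 x) (- q1 x) (- q2 x) (- q3 x).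
Definition qscal (a : A) : quat := Quat a 0 0 0.
End Quat.

Definition qmap (A B : comNzRingType) (f : A -> B) (x : quat A) : quat B :=
  Quat (f (q0 x)) (f (q1 x)) (f (q2 x)) (f (q3 x)).

Notation H R := (quat R).
Notation DH R := (quat (dual R)).

Definition pconj (A : comNzRingType) (M : {poly quat A}) : {poly quat A} :=
  map_poly (@qconj A) M.

Definition primal_poly (R : comNzRingType) (M : {poly DH R}) : {poly H R} :=
  map_poly (qmap (@dprim R)) M.

Definition primal_dpoly (R : comNzRingType) (N : {poly dual R}) : {poly R} :=
  map_poly (@dprim R) N.

Definition scal_poly (A : comNzRingType) (N : {poly A}) : {poly quat A} :=
  map_poly (@qscal A) N.

(* Main.v *)
Require Import Defs.
From HB Require Import structures.
From mathcomp Require Import all_boot all_order all_algebra.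
From mathcomp Require Import reals.
From mathcomp Require Import ring lra.
Import GRing.Theory Num.Theory.
Set Implicit Arguments. Unset Strict Implicit.
Local Open Scope ring_scope.

Section Q.
Variable A : comNzRingType.
Definition nu (r : quat A) : A := q0 r * q0 r + q1 r * q1 r + q2 r * q2 r + q3 r * q3 r.
Definition dot2 (r s : quat A) : A := 2 * (q0 r * q0 s + q1 r * q1 s + q2 r * q2 s + q3 r * q3 s).

Lemma quatE (x y : quat A) : q0 x = q0 y -> q1 x = q1 y -> q2 x = q2 y -> q3 x = q3 y -> x = y.
Proof. by case: x; case: y => /= ? ? ? ? ? ? ? ? -> -> -> ->. Qed.

Lemma qmulE (x y : quat A) : x * y = qmul x y. Proof. by []. Qed.
Lemma qaddE (x y : quat A) : x + y = qadd x y. Proof. by []. Qed.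
Lemma qoppE (x : quat A) : - x = qopp x. Proof. by []. Qed.
Lemma q0E : (0 : quat A) = Quat 0 0 0 0. Proof. by []. Qed.
Lemma q1E : (1 : quat A) = Quat 1 0 0 0. Proof. by []. Qed.

Lemma conj_norm r : r * qconj r = qscal (nu r).
Proof. case: r => a b c d; rewrite qmulE /qmul /qscal /nu /=; congr Quat; ring. Qed.
End Q.
Section Q2.
Variable A : comNzRingType.
Implicit Types r s x y : quat A.
Ltac qsolve := repeat match goal with r : quat A |- _ => case: r end => /=; intros;
  rewrite ?qmulE ?qaddE ?qoppE /qmul /qadd /qopp /qconj /qscal /nu /dot2 /=; congr Quat; ring.
Lemma conj_norm' r : qconj r * r = qscal (nu r). Proof. qsolve. Qed.
Lemma conj_dot r s : r * qconj s + s * qconj r = qscal (dot2 r s). Proof. qsolve. Qed.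
Lemma qscalM (a b : A) : qscal (a * b) = qscal a * qscal b. Proof. qsolve. Qed.
Lemma qscalD (a b : A) : qscal (a + b) = qscal a + qscal b. Proof. qsolve. Qed.
Lemma qscal0 : qscal (0 : A) = 0. Proof. by []. Qed.
Lemma qscal1 : qscal (1 : A) = 1. Proof. by []. Qed.
Lemma qscalC (a : A) r : qscal a * r = r * qscal a. Proof. qsolve. Qed.
Lemma qconjD r s : qconj (r + s) = qconj r + qconj s. Proof. qsolve. Qed.
Lemma qconj0 : qconj (0 : quat A) = 0. Proof. rewrite /qconj /=; congr Quat; ring. Qed.
Lemma qconjMs r (a : A) : qconj (r * qscal a) = qconj r * qscal a. Proof. qsolve. Qed.
Lemma qconj_scal (a : A) : qconj (qscal a) = qscal a. Proof. qsolve. Qed.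
Lemma conj_comm r : qconj r * r = r * qconj r. Proof. qsolve. Qed.
End Q2.
Section P.
Lemma map_polyD' (R1 R2 : nzRingType) (f : R1 -> R2) (f0 : f 0 = 0)
  (fD : forall x y, f (x + y) = f x + f y) (p q : {poly R1}) :
  map_poly f (p + q) = map_poly f p + map_poly f q.
Proof. by apply/polyP => i; rewrite coefD !coef_map_id0 // coefD fD. Qed.

Lemma map_polyM' (R1 R2 : nzRingType) (f : R1 -> R2) (f0 : f 0 = 0)
  (fD : forall x y, f (x + y) = f x + f y) (fM : forall x y, f (x * y) = f x * f y)
  (p q : {poly R1}) :
  map_poly f (p * q) = map_poly f p * map_poly f q.
Proof.
apply/polyP => i; rewrite coef_map_id0 // !coefM.
rewrite (big_morph f fD f0); apply: eq_bigr => j _.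
by rewrite fM !coef_map_id0.
Qed.

Variable A : comNzRingType.
Lemma size_map_le (B : nzRingType) (f : A -> B) (p : {poly A}) : (size (map_poly f p) <= size p)%N.
Proof. by rewrite map_polyE (leq_trans (size_Poly _)) // size_map. Qed.

Lemma coef_scal (n : {poly A}) i : (scal_poly n)`_i = qscal n`_i.
Proof. by rewrite coef_map_id0. Qed.
Lemma coef_pconj (p : {poly quat A}) i : (pconj p)`_i = qconj p`_i.
Proof. by rewrite coef_map_id0 // qconj0. Qed.

Lemma scal_comm (n : {poly A}) (p : {poly quat A}) : p * scal_poly n = scal_poly n * p.
Proof.
apply/polyP => i; rewrite coefMr coefM; apply: eq_bigr => j _.
by rewrite coef_scal qscalC.
Qed.

Lemma scalM (n m : {poly A}) : scal_poly (n * m) = scal_poly n * scal_poly m.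
Proof. apply: map_polyM' => //; [exact: qscalD | exact: qscalM]. Qed.

Lemma pconjD (p q : {poly quat A}) : pconj (p + q) = pconj p + pconj q.
Proof. apply: map_polyD' => //; [exact: qconj0 | exact: qconjD]. Qed.

Lemma pconjMs (p : {poly quat A}) (n : {poly A}) :
  pconj (p * scal_poly n) = pconj p * scal_poly n.
Proof.
apply/polyP => i; rewrite coef_pconj !coefM.
rewrite (big_morph _ (@qconjD A) (@qconj0 A)); apply: eq_bigr => j _.
by rewrite coef_pconj coef_scal qconjMs.
Qed.

Lemma pconj_scal (n : {poly A}) : pconj (scal_poly n) = scal_poly n.
Proof. by apply/polyP => i; rewrite coef_pconj coef_scal qconj_scal. Qed.

End P.
Lemma lin_quad (R : nzRingType) (a b : R) :
  ('X - a%:P) * ('X - b%:P) = 'X^2 + (- (a + b))%:P * 'X + (a * b)%:P.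
Proof.
rewrite mulrBl !mulrBr -(commr_polyX b%:P) -polyCM expr2 polyCN polyCD.
rewrite mulNr mulrDl opprB opprD.
rewrite [(a * b)%:P - _]addrC !addrA; congr (_ + _); rewrite -!addrA; congr (_ + _); exact: addrC.
Qed.
Section Dp.
Variable R : realType.
Implicit Types x y : quat (dual R).
Lemma qmapD x y : qmap (@dprim R) (x + y) = qmap (@dprim R) x + qmap (@dprim R) y.
Proof. by case: x y => ? ? ? ? [? ? ? ?]. Qed.
Lemma qmapM x y : qmap (@dprim R) (x * y) = qmap (@dprim R) x * qmap (@dprim R) y.
Proof. by case: x y => ? ? ? ? [? ? ? ?]. Qed.
Lemma qmap0 : qmap (@dprim R) 0 = 0. Proof. by []. Qed.
Lemma qmap_scal (a : dual R) : qmap (@dprim R) (qscal a) = qscal (dprim a). Proof. by []. Qed.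
Lemma dprim_nu x : dprim (nu x) = nu (qmap (@dprim R) x). Proof. by []. Qed.

Lemma nu0 (p : quat R) : nu p = 0 -> p = 0.
Proof.
case: p => a b c d; rewrite /nu /= => h.
have ha : a = 0 by nra.
have hb : b = 0 by nra.
have hc : c = 0 by nra.
have hd : d = 0 by nra.
by rewrite ha hb hc hd.
Qed.

Lemma dinv (v : dual R) : dprim v != 0 -> exists w, v * w = 1.
Proof.
case: v => p d /= hp; exists (Dual p^-1 (- d / p ^+ 2)).
change (dmul (Dual p d) (Dual p^-1 (- d / p ^+ 2)) = Dual 1 0); rewrite /dmul /=; congr Dual; field; exact: hp.
Qed.
End Dp.
Section Hq.
Variable A : comNzRingType.
Implicit Types r s x y : quat A.
Definition hroot (r1 r0 : quat A) (w : A) : quat A := qscal w * - (qconj r1 * r0).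

Ltac qsolve := repeat match goal with r : quat A |- _ => case: r end => /=; intros;
  rewrite /hroot ?qmulE ?qaddE ?qoppE /qmul /qadd /qopp /qconj /qscal /nu /dot2 /=; congr Quat; ring.

Lemma hroot_eq r1 r0 w : nu r1 * w = 1 -> r1 * hroot r1 r0 w + r0 = 0.
Proof.
move=> hw; have -> : r1 * hroot r1 r0 w + r0 = qscal (1 - nu r1 * w) * r0 by qsolve.
by rewrite hw subrr qscal0 mul0r.
Qed.

Lemma hroot_sum r1 r0 w N1 : nu r1 * w = 1 -> dot2 r0 r1 = nu r1 * N1 ->
  - (hroot r1 r0 w + qconj (hroot r1 r0 w)) = qscal N1.
Proof.
move=> hw he.
have -> : - (hroot r1 r0 w + qconj (hroot r1 r0 w)) = qscal (w * dot2 r0 r1) by qsolve.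
by rewrite he mulrA (mulrC w) hw mul1r.
Qed.

Lemma hroot_prod r1 r0 w N0 : nu r1 * w = 1 -> nu r0 = nu r1 * N0 ->
  hroot r1 r0 w * qconj (hroot r1 r0 w) = qscal N0.
Proof.
move=> hw he.
have -> : hroot r1 r0 w * qconj (hroot r1 r0 w) = qscal (w * w * nu r1 * nu r0) by qsolve.
by rewrite he !mulrA -(mulrA w) (mulrC w (nu r1)) hw mulr1 (mulrC w) hw mul1r.
Qed.

Lemma hroot_uniq r1 r0 w h' : nu r1 * w = 1 -> r0 = - (r1 * h') -> h' = hroot r1 r0 w.
Proof.
move=> hw ->.
have -> : hroot r1 (- (r1 * h')) w = qscal (w * nu r1) * h' by qsolve.
by rewrite mulrC hw qscal1 mul1r.
Qed.
End Hq.
Lemma zmod4 (V : zmodType) (a b c d : V) : d = a + b + c + d - a - b - c.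
Proof. by rewrite (addrC _ d) -!addrA -!opprD [b + (c - _)]addrA [a + (_ - _)]addrA subrr addr0. Qed.

Lemma norm_rearr (T : nzRingType) (Q Rm Qc Rc S Kp M Mc : T) :
  (forall p, p * S = S * p) -> M = Q * S + Rm -> Mc = Qc * S + Rc -> M * Mc = Kp * S ->
  Rm * Rc = (Kp - Q * S * Qc - Q * Rc - Rm * Qc) * S.
Proof.
move=> hc hM hMc hK.
have : M * Mc = Q * S * Qc * S + Q * Rc * S + Rm * Qc * S + Rm * Rc.
  rewrite hM hMc mulrDl !mulrDr !mulrA !addrA; congr (_ + _ + _ + _).
  by rewrite -!mulrA hc.
rewrite hK => e.
by rewrite !mulrBl e; exact: zmod4.
Qed.
Lemma poly_le3 (B : nzRingType) (p : {poly B}) : (size p <= 3)%N ->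
  p = 'X^2 * (p`_2)%:P + 'X * (p`_1)%:P + (p`_0)%:P.
Proof.
move=> hs; apply/polyP => i.
rewrite !coefD coefXnM coefXM !coefC.
case: i => [|[|[|i]]] //=.
- by rewrite !add0r.
- by rewrite add0r addr0.
- by rewrite !addr0.
- by rewrite nth_default ?(leq_trans hs) // !addr0.
Qed.
Lemma poly_le2 (B : nzRingType) (p : {poly B}) : (size p <= 2)%N ->
  p = 'X * (p`_1)%:P + (p`_0)%:P.
Proof.
move=> hs; apply/polyP => i.
rewrite !coefD coefXM !coefC.
case: i => [|[|i]] //=.
- by rewrite !add0r.
- by rewrite addr0.
- by rewrite nth_default ?(leq_trans hs) // !addr0.
Qed.
Section Gen.
Variable B : nzRingType.
Implicit Types p q r P : {poly B}.

Lemma coef2 p q r (x : B) : (size p <= 2)%N -> (size q <= 2)%N -> p * q = x%:P * r ->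
  [/\ p`_1 * q`_1 = x * r`_2, p`_0 * q`_1 + p`_1 * q`_0 = x * r`_1 & p`_0 * q`_0 = x * r`_0].
Proof.
move=> hp hq e.
have c : forall k, (p * q)`_k = x * r`_k by move=> k; rewrite e coefCM.
split; rewrite -c coefM !big_ord_recr big_ord0 ?add0r /= ?add0r ?subn0 ?subnn //.
by rewrite [q`_2]nth_default // [p`_2]nth_default // mul0r mulr0 add0r addr0.
Qed.

Lemma quad p (a b : B) : (size p <= 3)%N -> p`_2 = 1 -> - (a + b) = p`_1 -> a * b = p`_0 ->
  ('X - a%:P) * ('X - b%:P) = p.
Proof.
move=> hs h2 h1 h0; rewrite lin_quad [RHS]poly_le3 // h2 h1 h0 mulr1.
by rewrite commr_polyX.
Qed.

Lemma quad_swap (a b : B) : a * b = b * a ->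
  ('X - a%:P) * ('X - b%:P) = ('X - b%:P) * ('X - a%:P).
Proof. by move=> e; rewrite !lin_quad e (addrC a). Qed.

Lemma lin_eq p (a : B) : (size p <= 2)%N -> p`_1 * a + p`_0 = 0 ->
  p = (p`_1)%:P * ('X - a%:P).
Proof.
move=> hs e; rewrite {1}(poly_le2 hs) mulrBr -polyCM commr_polyX.
by rewrite -(addr0_eq e) polyCN.
Qed.

Lemma rem_fact (M Q Q2 Rm S T : {poly B}) (a : B) :
  M = Q * S + Rm -> M = Q2 * ('X - a%:P) -> S = T * ('X - a%:P) ->
  Rm = (Q2 - Q * T) * ('X - a%:P).
Proof.
move=> h1 h2 h3; rewrite mulrBl -mulrA -h3 -h2 h1.
by rewrite addrC addKr.
Qed.

Lemma lin_root p P (a : B) : (size p <= 2)%N -> p = P * ('X - a%:P) -> p`_0 = - (p`_1 * a).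
Proof.
move=> hs e.
have hP : (size P <= 1)%N.
  have [->|nz] := eqVneq P 0; first by rewrite size_poly0.
  move: hs; rewrite e size_Mmonic ?monicXsubC // size_XsubC addn2 /=.
  by [].
rewrite e (size1_polyC hP) mulrBr -polyCM commr_polyX.
rewrite !coefB !coefXM !coefC /=.
by rewrite sub0r subr0.
Qed.
End Gen.
Lemma size_map_le' (A B : nzRingType) (f : A -> B) (p : {poly A}) : (size (map_poly f p) <= size p)%N.
Proof. by rewrite map_polyE (leq_trans (size_Poly _)) // size_map. Qed.
Lemma sN_size (A : comNzRingType) (N : {poly A}) : N \is monic -> size (scal_poly N) = size N.
Proof. by move=> monN; rewrite size_map_poly_id0 // (eqP monN) qscal1 oner_neq0. Qed.
Lemma sN_monic (A : comNzRingType) (N : {poly A}) : N \is monic -> scal_poly N \is monic.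
Proof.
move=> monN; rewrite monicE /lead_coef sN_size // coef_scal.
by move: monN; rewrite monicE /lead_coef => /eqP ->; rewrite qscal1.
Qed.
Lemma qscal_inj (A : comNzRingType) (a b : A) : qscal a = qscal b -> a = b.
Proof. by case. Qed.

Lemma core (A : comNzRingType) (M : {poly quat A}) (N K : {poly A}) :
  N \is monic -> size N = 3%N -> M * pconj M = scal_poly (N * K) ->
  (forall Q Rm : {poly quat A}, M = Q * scal_poly N + Rm -> (size Rm <= 2)%N ->
     nu Rm`_0 = nu Rm`_1 * N`_0 -> exists w, nu Rm`_1 * w = 1) ->
  exists! h : quat A, (exists Q, M = Q * ('X - h%:P)) /\
     ('X - h%:P) * ('X - (qconj h)%:P) = scal_poly N.
Proof.
move=> monN sN3 hK hP.
have N2 : N`_2 = 1 by move: monN; rewrite monicE /lead_coef sN3 => /eqP.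
have monS := sN_monic monN.
have sNsz : size (scal_poly N) = 3%N by rewrite sN_size.
have [Q [Rm [hM hRs]]] : exists Q Rm, M = Q * scal_poly N + Rm /\ (size Rm <= 2)%N.
  exists (Pdiv.Ring.rdivp M (scal_poly N)), (Pdiv.Ring.rmodp M (scal_poly N)).
  split; first exact: Pdiv.RingMonic.rdivp_eq.
  by rewrite -ltnS -sNsz Pdiv.Ring.ltn_rmodpN0 // monic_neq0.
have hcomm : forall p, p * scal_poly N = scal_poly N * p by move=> p; exact: scal_comm.
have hMc : pconj M = pconj Q * scal_poly N + pconj Rm by rewrite {1}hM pconjD pconjMs.
have hK' : M * pconj M = scal_poly K * scal_poly N by rewrite hK mulrC scalM.
have hX := norm_rearr hcomm hM hMc hK'.
move: hX; set X := (_ - _ - _ - _) => hX.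
have hXs : (size X <= 1)%N.
  have hs1 : (size (Rm * pconj Rm)%R <= 3)%N.
    apply: (leq_trans (size_mul_leq _ _)).
    have := @size_map_le' _ _ (@qconj A) Rm.
    rewrite -/(pconj Rm) => h2.
    by move: (leq_add hRs (leq_trans h2 hRs)); case: (_ + _)%N.
  have [->|nz] := eqVneq X 0; first by rewrite size_poly0.
  move: hs1; rewrite hX size_Mmonic // sNsz addn3 /=.
  by [].
clearbody X.
move: hX; rewrite (size1_polyC hXs); move: (X`_0) => x hX.
have hRc : (size (pconj Rm) <= 2)%N.
  exact: (leq_trans (@size_map_le' _ _ (@qconj A) Rm) hRs).
have [e2 e1 e0] := coef2 hRs hRc hX.
rewrite !coef_pconj in e2 e1 e0.
rewrite !coef_scal in e2 e1 e0.
rewrite N2 qscal1 mulr1 conj_norm in e2.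
rewrite conj_norm -e2 -qscalM in e0.
rewrite conj_dot -e2 -qscalM in e1.
have hn0 := qscal_inj e0.
have hd1 := qscal_inj e1.
have [w hw] := hP Q Rm hM hRs hn0.
set h := hroot Rm`_1 Rm`_0 w.
have hr : Rm`_1 * h + Rm`_0 = 0 := hroot_eq Rm`_0 hw.
have hs := hroot_sum hw hd1.
have hp := hroot_prod hw hn0.
have hsq : ('X - h%:P) * ('X - (qconj h)%:P) = scal_poly N.
  apply: quad; first by rewrite sNsz.
  - by rewrite coef_scal N2 qscal1.
  - by rewrite coef_scal.
  - by rewrite coef_scal.
have hsq' : ('X - (qconj h)%:P) * ('X - h%:P) = scal_poly N.
  by rewrite (quad_swap (conj_comm h)).
exists h; split.
  split => //; exists (Q * ('X - (qconj h)%:P) + (Rm`_1)%:P).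
  by rewrite mulrDl -mulrA hsq' -(lin_eq hRs hr).
move=> h' [[Q2 hQ2] hN'].
have hN'' : scal_poly N = ('X - (qconj h')%:P) * ('X - h'%:P).
  by rewrite (quad_swap (conj_comm h')) hN'.
have hR := rem_fact hM hQ2 hN''.
have hr0 := lin_root hRs hR.
by rewrite /h; symmetry; exact: hroot_uniq hw hr0.
Qed.
Lemma map_le2_0 (B1 B2 : nzRingType) (f : B1 -> B2) (p : {poly B1}) :
  f 0 = 0 -> (size p <= 2)%N -> f p`_0 = 0 -> f p`_1 = 0 -> map_poly f p = 0.
Proof.
move=> f0 hs h0 h1; apply/polyP => i; rewrite coef_map_id0 // coef0.
case: i => [|[|i]] //; by rewrite nth_default ?(leq_trans hs).
Qed.

Lemma map_comp' (B1 B2 B3 B4 : nzRingType) (f : B2 -> B4) (g : B1 -> B2) (f' : B1 -> B3) (g' : B3 -> B4)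
  (p : {poly B1}) : f 0 = 0 -> g 0 = 0 -> f' 0 = 0 -> g' 0 = 0 ->
  (forall x, f (g x) = g' (f' x)) -> map_poly f (map_poly g p) = map_poly g' (map_poly f' p).
Proof.
move=> f0 g0 f'0 g'0 e; apply/polyP => i.
by rewrite !coef_map_id0 // e.
Qed.

Unset Implicit Arguments.
Theorem lemma3 (R : realType) (M : {poly DH R}) (N : {poly dual R}) :
  M \is monic ->
  N \is monic -> size N = 3%N ->
  (* N divides the norm polynomial M * conj(M) in D[t] *)
  (exists K : {poly dual R}, M * pconj M = scal_poly (N * K)) ->
  (* the (real) primal part of N does not divide the primal part P of M in H[t] *)
  ~ (exists Q : {poly H R},
        primal_poly M = Q * scal_poly (primal_dpoly N)) ->
  exists! h : DH R,
    (exists Q : {poly DH R}, M = Q * ('X - h%:P)) /\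
    ('X - h%:P) * ('X - (qconj h)%:P) = scal_poly N.
Proof.
move=> monM monN sN3 [K hK] hnd.
apply: (core monN sN3 hK) => Q Rm hM hRs hn0.
apply: dinv; apply/negP => /eqP h1.
have p1 : qmap (@dprim R) Rm`_1 = 0 by apply: nu0; rewrite -dprim_nu.
have h0 : dprim (nu Rm`_0) = 0.
  rewrite hn0; change (dprim (nu Rm`_1) * dprim N`_0 = 0).
  by rewrite h1 mul0r.
have p0 : qmap (@dprim R) Rm`_0 = 0 by apply: nu0; rewrite -dprim_nu.
apply: hnd; exists (primal_poly Q).
rewrite hM /primal_poly (map_polyD' (@qmap0 R) (@qmapD R)) (map_polyM' (@qmap0 R) (@qmapD R) (@qmapM R)).
rewrite (map_le2_0 (@qmap0 R) hRs p0 p1) addr0; congr (_ * _).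
by apply: map_comp'.
Qed.
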